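(* Let $(\gamma_{1j},\gamma_{2j})$, $j=1,\ldots,n$, be independent (across $j$) pairs of possibly correlated Bernoulli random variables with $\mathbb{E}\gamma_{ij}=\pi_{ij}$, let $\eta=(\eta_1,\ldots,\eta_n)$ be i.i.d. Bernoulli$(1/2)$ variables independent of all $\gamma_{ij}$, and let $\boldsymbol{A}=(a_{ij})$ be a deterministic real $n\times n$ matrix. For $0<\tau\le 1/(4\|\boldsymbol{A}\|_2^2)$, $$ \mathbb{E}\Big[\exp\Big(\tau\sum_{i:\eta_i=1}\gamma_{1i}\sum_{j:\eta_j=0}a_{ij}^2\gamma_{2j}\Big)\,\Big|\,\eta\Big]\le\exp\Big(1.44\,\tau\sum_{i\ne j}a_{ij}^2\pi_{1i}\pi_{2j}\Big). $$
   Context: $\|\boldsymbol{A}\|_2$ denotes the operator norm of $\boldsymbol{A}$. *)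

(* Defs.v *)
From HB Require Import structures.
From mathcomp Require Import all_boot all_order all_algebra.
From mathcomp Require Import all_classical all_reals all_analysis.
Set Implicit Arguments. Unset Strict Implicit. Unset Printing Implicit Defensive.
Import Order.TTheory GRing.Theory Num.Theory.
Local Open Scope ring_scope.
Local Open Scope classical_set_scope.

Definition opnorm (R : realType) (n : nat) (A : 'M[R]_n) : R :=
  sup [set r : R | exists x : 'cV[R]_n,
         \sum_(i < n) x i 0 ^+ 2 = 1 /\
         r = Num.sqrt (\sum_(i < n) (A *m x) i 0 ^+ 2)].

(* Finite sample space: outcomes of the pairs (gamma_1j, gamma_2j)_j and of
   eta = (eta_j)_j. *)
Definition gam_space (n : nat) := {ffun 'I_n -> bool * bool}.
Definition eta_space (n : nat) := {ffun 'I_n -> bool}.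

(* Probability of an outcome: the pairs are independent across j, pair j has
   joint law p j (p j a b = P(gamma_1j = a, gamma_2j = b)), and eta is an
   independent vector of i.i.d. Bernoulli(1/2) variables. *)
Definition weight (R : realType) (n : nat) (p : 'I_n -> bool -> bool -> R)
    (g : gam_space n) (e : eta_space n) : R :=
  (\prod_(j < n) p j (g j).1 (g j).2) * (\prod_(j < n) (2%:R)^-1).

(* Conditional expectation of X given eta, evaluated at eta = e
   (every value e of eta has probability 2^-n > 0). *)
Definition cond_exp_eta (R : realType) (n : nat) (p : 'I_n -> bool -> bool -> R)
    (X : gam_space n -> eta_space n -> R) (e : eta_space n) : R :=
  (\sum_(g : gam_space n) weight p g e * X g e) /
  (\sum_(g : gam_space n) weight p g e).

Definition pi1 (R : realType) (n : nat) (p : 'I_n -> bool -> bool -> R) (j : 'I_n) : R :=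
  \sum_(b : bool) p j true b.
Definition pi2 (R : realType) (n : nat) (p : 'I_n -> bool -> bool -> R) (j : 'I_n) : R :=
  \sum_(a : bool) p j a true.

(* Main.v *)
Require Import Defs.
From HB Require Import structures.
From mathcomp Require Import all_boot all_order all_algebra.
From mathcomp Require Import all_classical all_reals all_analysis.
From mathcomp Require Import ring lra.
Import Order.TTheory GRing.Theory Num.Theory.
Local Open Scope ring_scope.

Lemma sum_le_one (R : realType) (n : nat) (F : 'I_n -> R) (k : 'I_n) :
  (forall j, 0 <= F j) -> F k <= \sum_j F j.
Proof.
move=> F0; rewrite (bigD1 k) //= lerDl; exact: sumr_ge0.
Qed.

Lemma opnorm_ub (R : realType) (n : nat) (A : 'M[R]_n) (x : 'cV[R]_n) :
  \sum_(i < n) x i 0 ^+ 2 = 1 ->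
  Num.sqrt (\sum_(i < n) (A *m x) i 0 ^+ 2) <= opnorm A.
Proof.
move=> hx.
apply: sup_upper_bound; last by exists x.
split; first by exists (Num.sqrt (\sum_(i < n) (A *m x) i 0 ^+ 2)), x.
exists (Num.sqrt (\sum_(k < n) (\sum_(j < n) `|A k j|) ^+ 2)).
move=> r [y [hy ->]].
rewrite ler_sqrt; last by apply: sumr_ge0 => k _; exact: sqr_ge0.
apply: ler_sum => k _.
rewrite -real_normK ?num_real //.
apply: lerXn2r; rewrite ?nnegrE ?normr_ge0 ?sumr_ge0 //.
rewrite mxE; apply: le_trans (ler_norm_sum _ _ _) _.
apply: ler_sum => j _; rewrite normrM.
have yj : `|y j 0| <= 1.
  have h1 : y j 0 ^+ 2 <= 1.
    rewrite -hy; apply: (@sum_le_one _ _ (fun i => y i 0 ^+ 2)) => i; exact: sqr_ge0.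
  rewrite -(real_normK (num_real (y j 0))) in h1.
  have := normr_ge0 (y j 0). nra.
have := normr_ge0 (A k j). nra.
Qed.

Lemma opnorm_col (R : realType) (n : nat) (A : 'M[R]_n) (j : 'I_n) :
  \sum_(i < n) A i j ^+ 2 <= opnorm A ^+ 2.
Proof.
pose x : 'cV[R]_n := \col_k (k == j)%:R.
have hx : \sum_(i < n) x i 0 ^+ 2 = 1.
  rewrite (bigD1 j) //= big1 ?addr0 => [|i /negbTE hi]; rewrite mxE ?eqxx ?hi /= ?mulr1n ?mulr0n ?expr1n ?expr0n // sqrrN ?expr1n // ?expr0n.
have := @opnorm_ub _ _ A _ hx.
have -> : \sum_(i < n) (A *m x) i 0 ^+ 2 = \sum_(i < n) A i j ^+ 2.
  apply: eq_bigr => i _; rewrite mxE (bigD1 j) //= big1 ?addr0 => [|k /negbTE hk].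
    by rewrite mxE eqxx mulr1.
  by rewrite mxE hk mulr0.
move=> h.
have s0 : 0 <= \sum_(i < n) A i j ^+ 2 by apply: sumr_ge0 => i _; exact: sqr_ge0.
rewrite -(sqr_sqrtr s0); apply: lerXn2r; rewrite ?nnegrE ?sqrtr_ge0 //.
exact: le_trans (sqrtr_ge0 _) h.
Qed.

Lemma opnorm_row (R : realType) (n : nat) (A : 'M[R]_n) (i : 'I_n) :
  \sum_(j < n) A i j ^+ 2 <= opnorm A ^+ 2.
Proof.
set s := \sum_(j < n) A i j ^+ 2.
have s0 : 0 <= s by apply: sumr_ge0 => j _; exact: sqr_ge0.
have [s00|sp] := eqVneq s 0; first by rewrite s00 sqr_ge0.
have rp : 0 < Num.sqrt s by rewrite sqrtr_gt0 lt_neqAle eq_sym sp s0.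
set rho := Num.sqrt s.
pose x : 'cV[R]_n := \col_k (A i k / rho).
have rho2 : rho ^+ 2 = s by rewrite sqr_sqrtr.
have hx : \sum_(k < n) x k 0 ^+ 2 = 1.
  under eq_bigr do rewrite mxE expr_div_n.
  by rewrite -mulr_suml rho2 mulfV.
have := @opnorm_ub _ _ A _ hx.
move=> h.
have hi : (A *m x) i 0 = rho.
  rewrite mxE; under eq_bigr do rewrite mxE mulrA -expr2.
  by rewrite -mulr_suml -/s -rho2 expr2 mulfK // gt_eqF.
have : rho <= opnorm A.
  apply: le_trans h.
  rewrite -[X in X <= _](gtr0_norm rp) -sqrtr_sqr ler_sqrt; last by apply: sumr_ge0 => k _; exact: sqr_ge0.
  rewrite sqr_sqrtr // -rho2 -hi; apply: (@sum_le_one _ _ (fun k => (A *m x) k 0 ^+ 2)) => k; exact: sqr_ge0.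
move=> hr; have o0 : 0 <= opnorm A by apply: le_trans (ltW rp) hr.
rewrite -rho2; apply: lerXn2r => //; rewrite nnegrE ?ltW //.
Qed.

Lemma ind_prod (R : realType) (n : nat) (Y : finType) (F : 'I_n -> Y) (z : {ffun 'I_n -> Y}) :
  \prod_j ((F j == z j)%:R : R) = (([ffun j => F j] == z)%:R).
Proof.
have [<-|ne] := eqVneq [ffun j => F j] z.
  by rewrite big1 // => j _; rewrite ffunE eqxx.
have [j hj] : exists j, F j != z j.
  apply/existsP; apply: contraNT ne => /existsPn h.
  by apply/eqP/ffunP => j; rewrite ffunE; apply/eqP; have := h j; rewrite negbK.
by rewrite (bigD1 j) //= (negbTE hj) mul0r.
Qed.

Lemma push1 (R : realType) (n : nat) (X Y : finType) (w : 'I_n -> X -> R)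
  (h : 'I_n -> X -> Y) (G : {ffun 'I_n -> Y} -> R) :
  \sum_(g : {ffun 'I_n -> X}) (\prod_j w j (g j)) * G [ffun j => h j (g j)] =
  \sum_(z : {ffun 'I_n -> Y}) (\prod_j \sum_u (w j u * (h j u == z j)%:R)) * G z.
Proof.
transitivity (\sum_(g : {ffun 'I_n -> X}) \sum_(z : {ffun 'I_n -> Y})
   (\prod_j w j (g j)) * ((\prod_j ((h j (g j) == z j)%:R : R)) * G z)).
  apply: eq_bigr => g _; rewrite -big_distrr /=; congr (_ * _).
  rewrite (bigD1 [ffun j => h j (g j)]) //=.
  have E := @ind_prod R n _ (fun j => h j (g j)) [ffun j => h j (g j)]; rewrite /= in E.
  rewrite E eqxx mul1r big1 ?addr0 // => z hz.
  have E' := @ind_prod R n _ (fun j => h j (g j)) z; rewrite /= in E'.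
  by rewrite E' eq_sym (negbTE hz) mul0r.
rewrite exchange_big; apply: eq_bigr => z _ /=.
under eq_bigr do rewrite mulrA -big_split /=.
rewrite -big_distrl /=; congr (_ * _).
by rewrite bigA_distr_bigA.
Qed.

Lemma push2 (R : realType) (n : nat) (r : 'I_n -> bool -> R)
  (h : 'I_n -> bool * bool -> bool) (G : {ffun 'I_n -> bool} -> R) :
  \sum_(x : {ffun 'I_n -> bool}) \sum_(y : {ffun 'I_n -> bool})
     (\prod_j r j (x j)) * (\prod_j r j (y j)) * G [ffun j => h j (x j, y j)] =
  \sum_(z : {ffun 'I_n -> bool})
     (\prod_j \sum_s \sum_t (r j s * r j t * (h j (s, t) == z j)%:R)) * G z.
Proof.
transitivity (\sum_(x : {ffun 'I_n -> bool}) \sum_(y : {ffun 'I_n -> bool}) \sum_(z : {ffun 'I_n -> bool})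
   (\prod_j r j (x j)) * (\prod_j r j (y j)) * ((\prod_j ((h j (x j, y j) == z j)%:R : R)) * G z)).
  apply: eq_bigr => x _; apply: eq_bigr => y _; rewrite -big_distrr /=; congr (_ * _).
  rewrite (bigD1 [ffun j => h j (x j, y j)]) //=.
  have E := @ind_prod R n _ (fun j => h j (x j, y j)) [ffun j => h j (x j, y j)]; rewrite /= in E.
  rewrite E eqxx mul1r big1 ?addr0 // => z hz.
  have E' := @ind_prod R n _ (fun j => h j (x j, y j)) z; rewrite /= in E'.
  by rewrite E' eq_sym (negbTE hz) mul0r.
under eq_bigr do rewrite exchange_big.
rewrite exchange_big; apply: eq_bigr => z _ /=.
under eq_bigr do under eq_bigr do rewrite mulrA -!big_split /=.
under eq_bigr do rewrite -big_distrl /=.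
rewrite -big_distrl /=; congr (_ * _).
rewrite bigA_distr_bigA /=; apply: eq_bigr => x _.
by rewrite bigA_distr_bigA.
Qed.

Lemma sum_bool2 (R : realType) (F : bool * bool -> R) :
  \sum_u F u = F (true, true) + F (true, false) + F (false, true) + F (false, false).
Proof.
rewrite (eq_bigr (fun u => F (u.1, u.2))); last by case.
by rewrite -(pair_big xpredT xpredT (fun a b => F (a, b))) /= !big_bool /= addrA.
Qed.

Lemma sub_sum_le2 (R : realType) (n : nat) (P Q : pred 'I_n) (F : 'I_n -> R) :
  (forall j, 0 <= F j) -> \sum_(j | P j && Q j) F j <= \sum_(j | P j) F j.
Proof.
move=> F0; rewrite [X in _ <= X](bigID Q) /= lerDl; exact: sumr_ge0.
Qed.

Lemma sub_sum_le (R : realType) (n : nat) (P : pred 'I_n) (F : 'I_n -> R) :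
  (forall j, 0 <= F j) -> \sum_(j | P j) F j <= \sum_j F j.
Proof.
move=> F0; have := @sub_sum_le2 R n xpredT P F F0.
by rewrite /=; under eq_bigl do rewrite /=.
Qed.

Lemma prod_exp (R : realType) (n : nat) (r phi : 'I_n -> bool -> R) :
  \sum_(x : {ffun 'I_n -> bool}) (\prod_j r j (x j)) * \prod_j phi j (x j) =
  \prod_j \sum_s r j s * phi j s.
Proof.
rewrite bigA_distr_bigA /=; apply: eq_bigr => x _.
by rewrite big_split.
Qed.

Lemma expR_le_inv {R : realType} (y : R) : y < 1 -> expR y <= (1 - y)^-1.
Proof.
move=> y1.
have h : 1 - y <= expR (- y) by have := expR_ge1Dx (- y).
have -> : expR y = (expR (-y))^-1 by rewrite expRN invrK.
by rewrite lef_pV2 ?posrE ?expR_gt0 ?subr_gt0.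
Qed.

Lemma expR3 (R : realType) : expR (3/10 : R) <= 34/25.
Proof.
have -> : (3/10 : R) = 8%:R * (3/80) by lra.
rewrite expRM_natl.
apply: le_trans (_ : (80/77 : R)^+8 <= _); last by lra.
apply: lerXn2r; rewrite ?nnegrE ?expR_ge0 //; last first.
have h : (3/80 : R) < 1 by lra.
have := expR_le_inv _ h.
have -> : (1 - 3/80 : R) = 77/80 by lra.
by rewrite invf_div.
Qed.

Lemma exp_bd (R : realType) (x : R) : 0 <= x -> x <= 3/10 -> expR x <= 1 + (6/5) * x.
Proof.
move=> x0 x3.
have t0 : 0 <= x * (10/3) by lra.
have t1 : x * (10/3) <= 1 by lra.
have := convex_expR (Itv01 t0 t1) (3/10 : R^o) (0 : R^o).
rewrite !convRE /= expR0 /unstable.onem mulr0 addr0.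
have -> : x * (10 / 3) * (3 / 10) = x by field.
move=> h; apply: le_trans h _.
have := expR3 R. nra.
Qed.

Lemma factor_bd (R : realType) (q0 q1 a : R) :
  0 <= q0 -> 0 <= q1 -> q0 + q1 = 1 -> 0 <= a -> a <= 3/10 ->
  q1 * expR a + q0 * 1 <= expR (6/5 * q1 * a).
Proof.
move=> h0 h1 hs a0 a3.
have := exp_bd _ _ a0 a3 => h.
have := expR_ge1Dx (6/5 * q1 * a) => h'.
apply: le_trans h'. nra.
Qed.

Lemma stage1 (R : realType) (n : nat) (P : pred 'I_n) (r : 'I_n -> bool -> R) (c : 'I_n -> R) (tau : R) :
  (forall j b, 0 <= r j b) -> (forall j, r j false + r j true = 1) ->
  (forall i, 0 <= tau * c i) -> (forall i, tau * c i <= 3/10) ->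
  \sum_(x : {ffun 'I_n -> bool}) (\prod_j r j (x j)) * expR (tau * \sum_(i | P i) ((x i)%:R * c i))
   <= expR (\sum_(i | P i) 6/5 * r i true * (tau * c i)).
Proof.
move=> r0 rs hc0 hc3.
pose phi := fun i (s : bool) => if P i then expR (tau * (s%:R * c i)) else 1.
have E : forall x : {ffun 'I_n -> bool}, expR (tau * \sum_(i | P i) ((x i)%:R * c i)) =
   \prod_i phi i (x i).
  move=> x; rewrite mulr_sumr expR_sum big_mkcond /=.
  by apply: eq_bigr => i _; rewrite /phi; case: (P i).
under eq_bigr do rewrite E.
rewrite (prod_exp _ _ r phi) expR_sum [in X in _ <= X]big_mkcond /=.
apply: ler_prod => i _; rewrite /phi; case: (P i) => /=.
- rewrite big_bool /= mulr1n mulr0n mul1r mul0r mulr0 expR0.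
  apply/andP; split.
    by apply: addr_ge0; apply: mulr_ge0 => //; exact: expR_ge0.
  exact: factor_bd.
- rewrite big_bool /= !mulr1 addrC rs; apply/andP; split; lra.
Qed.

Lemma stageE (R : realType) (n : nat) (e : 'I_n -> bool) (r : 'I_n -> bool -> R)
  (B : 'I_n -> 'I_n -> R) (tau M : R) :
  (forall j b, 0 <= r j b) -> (forall j, r j false + r j true = 1) ->
  (forall i j, 0 <= B i j) ->
  (forall i, \sum_j B i j <= M) -> (forall j, \sum_i B i j <= M) ->
  0 < tau -> 4%:R * tau * M <= 1 ->
  \sum_(x : {ffun 'I_n -> bool}) \sum_(y : {ffun 'I_n -> bool})
     (\prod_j r j (x j)) * (\prod_j r j (y j)) *
     expR (tau * \sum_(i | e i) ((x i)%:R * \sum_(j | ~~ e j) B i j * (y j)%:R))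
  <= expR (36/25 * tau * \sum_(j | ~~ e j) r j true * \sum_(i | e i) r i true * B i j).
Proof.
move=> r0 rs B0 Mr Mc t0 tM.
have r1 : forall j b, r j b <= 1.
  by move=> j b; have := rs j; have := r0 j true; have := r0 j false; case: b => /=; lra.
rewrite exchange_big /=.
under eq_bigr => y _ do under eq_bigr => x _ do rewrite mulrAC.
under eq_bigr => y _ do rewrite -big_distrl /=.
pose d j := \sum_(i | e i) r i true * B i j.
apply: (@le_trans _ _ (\sum_(y : {ffun 'I_n -> bool}) (\prod_j r j (y j)) *
    expR (tau * \sum_(j | ~~ e j) ((y j)%:R * (6/5 * d j))))).
  apply: ler_sum => y _; rewrite mulrC; apply: ler_wpM2l.
    by apply: prodr_ge0 => j _; exact: r0.
  apply: le_trans (stage1 _ _ _ _ _ _ r0 rs _ _) _.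
  - move=> i; apply: mulr_ge0; first exact: ltW.
    by apply: sumr_ge0 => j _; apply: mulr_ge0 => //; exact: ler0n.
  - move=> i.
    have h1 : \sum_(j | ~~ e j) B i j * (y j)%:R <= M.
      apply: le_trans (Mr i); apply: le_trans (sub_sum_le _ _ _ _ (B0 i)).
      by apply: ler_sum => j _; case: (y j) => /=; rewrite ?mulr1n ?mulr0n ?mulr1 ?mulr0.
    have h2 := ler_wpM2l (ltW t0) h1.
    lra.
  rewrite le_eqVlt; apply/orP; left; apply/eqP; congr expR.
  transitivity (\sum_(i | e i) \sum_(j | ~~ e j) 6/5 * r i true * tau * B i j * (y j)%:R).
    by apply: eq_bigr => i _; rewrite !big_distrr; apply: eq_bigr => j _ /=; ring.
  rewrite exchange_big big_distrr; apply: eq_bigr => j _ /=.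
  by rewrite /d !big_distrr; apply: eq_bigr => i _ /=; ring.
have hd : forall j, d j <= M.
  move=> j; apply: le_trans (Mc j); apply: le_trans (sub_sum_le _ _ _ _ (fun i => B0 i j)).
  by apply: ler_sum => i _; have := r1 i true; have := B0 i j; have := r0 i true; nra.
have hd0 : forall j, 0 <= d j.
  by move=> j; apply: sumr_ge0 => i _; apply: mulr_ge0.
apply: le_trans (stage1 _ _ _ _ _ _ r0 rs _ _) _.
- move=> j; apply: mulr_ge0; first exact: ltW.
  by have := hd0 j; lra.
- move=> j; have := hd j; have := hd0 j; nra.
rewrite le_eqVlt; apply/orP; left; apply/eqP; congr expR.
rewrite mulr_sumr; apply: eq_bigr => j _; by rewrite -/(d j); field.
Qed.

Lemma final_cmp (R : realType) (n : nat) (e : 'I_n -> bool) (r : 'I_n -> bool -> R)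
  (B : 'I_n -> 'I_n -> R) (p1 p2 : 'I_n -> R) (tau : R) :
  0 < tau -> (forall i j, 0 <= B i j) -> (forall i, 0 <= p1 i) -> (forall j, 0 <= p2 j) ->
  (forall i, e i -> r i true = p1 i) -> (forall j, ~~ e j -> r j true = p2 j) ->
  36/25 * tau * \sum_(j | ~~ e j) r j true * \sum_(i | e i) r i true * B i j <=
  (144%:R / 100%:R) * tau * \sum_i \sum_(j | i != j) B i j * p1 i * p2 j.
Proof.
move=> t0 B0 p10 p20 hr1 hr2.
have E : \sum_(j | ~~ e j) r j true * \sum_(i | e i) r i true * B i j =
         \sum_(i | e i) \sum_(j | ~~ e j) B i j * p1 i * p2 j.
  under eq_bigr => j hj do rewrite mulr_sumr.
  rewrite exchange_big; apply: eq_bigr => i hi; apply: eq_bigr => j hj.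
  rewrite (hr1 i hi) (hr2 j hj); ring.
have F0 : forall i j, 0 <= B i j * p1 i * p2 j.
  by move=> i j; apply: mulr_ge0; [apply: mulr_ge0|].
have L : \sum_(i | e i) \sum_(j | ~~ e j) B i j * p1 i * p2 j <=
         \sum_i \sum_(j | i != j) B i j * p1 i * p2 j.
  apply: le_trans (sub_sum_le _ _ _ _ _); last first.
    by move=> i; apply: sumr_ge0 => j _.
  apply: ler_sum => i hi.
  have -> : \sum_(j | ~~ e j) B i j * p1 i * p2 j =
            \sum_(j | (i != j) && ~~ e j) B i j * p1 i * p2 j.
    apply: eq_bigl => j; case: (eqVneq i j) => [<-|//]; by rewrite hi.
  exact: sub_sum_le2.
rewrite E; have S0 : 0 <= \sum_(i | e i) \sum_(j | ~~ e j) B i j * p1 i * p2 j.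
  by apply: sumr_ge0 => i _; apply: sumr_ge0.
nra.
Qed.

Lemma sum_prod (R : realType) (n : nat) (X : finType) (F : 'I_n -> X -> R) :
  \sum_(g : {ffun 'I_n -> X}) \prod_j F j (g j) = \prod_j \sum_u F j u.
Proof. by rewrite bigA_distr_bigA. Qed.

Theorem lemma5 (R : realType) (n : nat) (p : 'I_n -> bool -> bool -> R)
    (A : 'M[R]_n) (tau : R)
    (p_ge0 : forall j a b, 0 <= p j a b)
    (p_sum1 : forall j, \sum_(a : bool) \sum_(b : bool) p j a b = 1)
    (tau_gt0 : 0 < tau)
    (tau_le : 4%:R * tau * opnorm A ^+ 2 <= 1) :
  forall e : eta_space n,
    cond_exp_eta p
      (fun (g : gam_space n) (eta : eta_space n) =>
         expR (tau * \sum_(i < n | eta i)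
                 ((g i).1%:R * \sum_(j < n | ~~ eta j) A i j ^+ 2 * (g j).2%:R)))
      e
    <= expR ((144%:R / 100%:R) * tau *
             \sum_(i < n) \sum_(j < n | i != j) A i j ^+ 2 * pi1 p i * pi2 p j).
Proof.
move=> e.
pose h := fun (j : 'I_n) (u : bool * bool) => if e j then u.1 else u.2.
pose rho := fun j (t : bool) => \sum_(u : bool * bool) p j u.1 u.2 * ((h j u == t)%:R : R).
pose G := fun z : {ffun 'I_n -> bool} =>
  expR (tau * \sum_(i < n | e i) ((z i)%:R * \sum_(j < n | ~~ e j) A i j ^+ 2 * (z j)%:R)).
have ps : forall j, p j true true + p j true false + p j false true + p j false false = 1.
  by move=> j; have := p_sum1 j; rewrite !big_bool /= addrA.
have rho_t : forall j, rho j true = if e j then pi1 p j else pi2 p j.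
  move=> j; rewrite /rho sum_bool2 /h /pi1 /pi2 !big_bool.
  by case: (e j) => /=; rewrite ?mulr1n ?mulr0n ?mulr1 ?mulr0 ?addr0 ?add0r.
have rho_s : forall j, rho j false + rho j true = 1.
  move=> j; rewrite /rho !sum_bool2 /h; have := ps j.
  by case: (e j) => /=; rewrite ?mulr1n ?mulr0n ?mulr1 ?mulr0 ?addr0 ?add0r; lra.
have rho0 : forall j b, 0 <= rho j b.
  by move=> j b; apply: sumr_ge0 => u _; apply: mulr_ge0 => //; exact: ler0n.
have stepA : cond_exp_eta p
      (fun (g : gam_space n) (eta : eta_space n) =>
         expR (tau * \sum_(i < n | eta i)
                 ((g i).1%:R * \sum_(j < n | ~~ eta j) A i j ^+ 2 * (g j).2%:R))) e =
   \sum_(g : {ffun 'I_n -> bool * bool}) (\prod_j p j (g j).1 (g j).2) * G [ffun j => h j (g j)].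
  rewrite /cond_exp_eta /weight /=.
  set c := \prod_(j < n) (2%:R : R)^-1.
  have c0 : 0 < c by apply: prodr_gt0 => j _; rewrite invr_gt0 ltr0n.
  have den : \sum_(g : gam_space n) (\prod_j p j (g j).1 (g j).2) * c = c.
    rewrite -big_distrl /= -[RHS]mul1r; congr (_ * _).
    rewrite (sum_prod _ _ _ (fun j (u : bool * bool) => p j u.1 u.2)).
    by apply: big1 => j _; rewrite sum_bool2 ps.
  rewrite den [LHS]big_distrl /=.
  apply: eq_bigr => g _; rewrite -!mulrA; congr (_ * _).
  rewrite mulrC -mulrA mulVf ?gt_eqF // mulr1 /G; congr expR; congr (_ * _).
  apply: eq_bigr => i ei; rewrite ffunE /h ei /=; congr (_ * _).
  by apply: eq_bigr => j ej; rewrite ffunE /h (negbTE ej).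
rewrite stepA (push1 _ _ _ _ (fun j (u : bool * bool) => p j u.1 u.2) h G).
have step3 : forall j t, rho j t = \sum_s \sum_t' rho j s * rho j t' * ((h j (s, t') == t)%:R : R).
  move=> j t; rewrite !big_bool /h; have hs := rho_s j.
  by case: t; move: (rho j true) (rho j false) hs => a b hab;
    (have -> : b = 1 - a by lra); case: (e j) => /=; ring.
rewrite (eq_bigr (fun z : {ffun 'I_n -> bool} => (\prod_j \sum_s \sum_t' rho j s * rho j t' * ((h j (s, t') == z j)%:R : R)) * G z)); last first.
  by move=> z _; congr (_ * _); apply: eq_bigr => j _; exact: (step3 j (z j)).
rewrite -(push2 _ _ rho h G).
have GE : forall x y : {ffun 'I_n -> bool}, G [ffun j => h j (x j, y j)] =
   expR (tau * \sum_(i | e i) ((x i)%:R * \sum_(j | ~~ e j) A i j ^+ 2 * (y j)%:R)).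
  move=> x y; rewrite /G; congr expR; congr (_ * _).
  apply: eq_bigr => i ei; rewrite ffunE /h ei /=; congr (_ * _).
  by apply: eq_bigr => j ej; rewrite ffunE /h (negbTE ej).
rewrite (eq_bigr (fun x : {ffun 'I_n -> bool} => \sum_(y : {ffun 'I_n -> bool})
   (\prod_j rho j (x j)) * (\prod_j rho j (y j)) *
   expR (tau * \sum_(i | e i) ((x i)%:R * \sum_(j | ~~ e j) A i j ^+ 2 * (y j)%:R)))); last first.
  by move=> x _; apply: eq_bigr => y _; rewrite GE.
apply: le_trans (stageE _ _ e rho (fun i j => A i j ^+ 2) tau (opnorm A ^+ 2) rho0 rho_s _ _ _ tau_gt0 tau_le) _.
- by move=> i j; exact: sqr_ge0.
- by move=> i; exact: opnorm_row.
- by move=> j; exact: opnorm_col.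
rewrite ler_expR.
apply: (final_cmp _ _ e rho (fun i j => A i j ^+ 2) (pi1 p) (pi2 p) tau tau_gt0).
- by move=> i j; exact: sqr_ge0.
- by move=> i; apply: sumr_ge0.
- by move=> j; apply: sumr_ge0.
- by move=> i ei; rewrite rho_t ei.
- by move=> j ej; rewrite rho_t (negbTE ej).
Qed.
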